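(* Let $a\geq5$. The function $F\colon[0,+\infty)\times[0,+\infty)\to[0,+\infty)\times[0,+\infty)$ defined by $$F(z,w)=\left(\frac{z+w}{1+z+w},\ \frac{z\bigl(a(1+z)+(a+3)w\bigr)}{(1+z+w)^2}\right)$$ is injective. *)

(* Defs.v *)
From mathcomp Require Import all_boot all_order all_algebra.
From mathcomp Require Import reals.
Set Implicit Arguments. Unset Strict Implicit. Unset Printing Implicit Defensive.
Import Order.TTheory GRing.Theory Num.Theory.
Local Open Scope ring_scope.

Definition Fmap (R : realType) (a : R) (p : R * R) : R * R :=
  let z := p.1 in let w := p.2 in
  ((z + w) / (1 + z + w),
   z * (a * (1 + z) + (a + 3) * w) / (1 + z + w) ^+ 2).

(* Main.v *)
Require Import Defs.
From mathcomp Require Import all_boot all_order all_algebra.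
From mathcomp Require Import reals.
From mathcomp Require Import ring lra.
Import Order.TTheory GRing.Theory Num.Theory.
Local Open Scope ring_scope.

Theorem lemma4p5 (R : realType) (a : R) (ha : 5 <= a) (z1 w1 z2 w2 : R) :
  0 <= z1 -> 0 <= w1 -> 0 <= z2 -> 0 <= w2 ->
  Fmap a (z1, w1) = Fmap a (z2, w2) -> (z1, w1) = (z2, w2).
Proof.
move=> hz1 hw1 hz2 hw2; rewrite /Fmap /=; case=> E1 E2.
have d1 : 1 + z1 + w1 != 0 by apply/lt0r_neq0; lra.
have d2 : 1 + z2 + w2 != 0 by apply/lt0r_neq0; lra.
move/eqP: E1; rewrite eqr_div // => /eqP E1.
have hs : z1 + w1 = z2 + w2 by lra.
have hw : w2 = z1 + w1 - z2 by rewrite hs; ring.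
have dd : 1 + z2 + w2 = 1 + z1 + w1 by rewrite hw; ring.
rewrite dd in E2.
have d1' : (1 + z1 + w1) ^+ 2 != 0 by rewrite expf_neq0.
move/eqP: E2; rewrite eqr_div // => /eqP E2.
have E3 := mulIf d1' E2.
set s := z1 + w1 in hw E3.
have hz : z1 = z2.
  have pos : 0 < a + (a + 3) * s - 3 * (z1 + z2).
    have : z1 <= s by rewrite /s; lra.
    have : z2 <= s by move: hw2; rewrite hw; lra.
    have : 0 <= s by rewrite /s; lra.
    nra.
  have : (z1 - z2) * (a + (a + 3) * s - 3 * (z1 + z2)) = 0.
    have -> : (z1 - z2) * (a + (a + 3) * s - 3 * (z1 + z2)) =
      z1 * (a * (1 + z1) + (a + 3) * w1) - z2 * (a * (1 + z2) + (a + 3) * w2).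
      rewrite hw /s; ring.
    by rewrite E3 subrr.
  move/eqP; rewrite mulf_eq0 => /orP [/eqP|]; first by move/eqP; rewrite subr_eq0 => /eqP.
  by move=> /eqP h; move: pos; rewrite h ltxx.
by rewrite hw /s hz; congr pair; ring.
Qed.
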